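(* (i) For $(t,x)$ with $0\le t<1$ and $|x|<B^*\sqrt{1-t}$, $\mathcal{L}J^*(t,x)=0$. (ii) For $(t,x)$ with $0\le t<1$ and $|x|>B^*\sqrt{1-t}$, $\mathcal{L}J^*(t,x)\le0$. Here $$J^*(t,x)=\begin{cases}(1-t)^{n+1/2}(F_{2n+1}+G_{2n+1})(x/\sqrt{1-t})\,j(B^* ), & |x|<B^*\sqrt{1-t},\\ g(t,x), & |x|\ge B^*\sqrt{1-t}.\end{cases}$$
   Context: For a function $\xi(t,x)$, $\mathcal{L}\xi=\frac{\partial\xi}{\partial t}-\frac{x}{1-t}\frac{\partial\xi}{\partial x}+\frac12\frac{\partial^2\xi}{\partial x^2}$. $n\ge0$ is an integer. $F_q(y):=\int_0^\infty u^{q-1}e^{yu-u^2/2}\,\mathrm{d}u$ and $G_q(y):=F_q(-y)$. $B^*>0$ is the unique zero of $B\mapsto(2n+1)-BF'_{2n+1}(B)/F_{2n+1}(B)$. $U(t,x)=(1-t)^{n+1/2}(B^* )^{2n+1}F_{2n+1}(x/\sqrt{1-t})/F_{2n+1}(B^* )$ if $x<B^*\sqrt{1-t}$, and $U(t,x)=x^{2n+1}$ otherwise. $g(t,x):=(U(t,x)-x^{2n+1})1_{\{x\le0\}}+(U(t,-x)+x^{2n+1})1_{\{x>0\}}$. $j(D):=\frac{1}{(F_{2n+1}+G_{2n+1})(D)}[D^{2n+1}+(B^* )^{2n+1}G_{2n+1}(D)/F_{2n+1}(B^* )]$. *)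

(* Defs.v *)
From Stdlib Require Import Reals Lra.
From Coquelicot Require Import Coquelicot.
Open Scope R_scope.

Definition Fq (q : nat) (y : R) : R :=
  RInt_gen (fun u => u ^ (q - 1) * exp (y * u - u ^ 2 / 2))
           (at_point 0) (Rbar_locally p_infty).

Definition Gq (q : nat) (y : R) : R := Fq q (- y).

(* The function whose unique positive zero is B^* :
   B |-> (2n+1) - B F'_{2n+1}(B) / F_{2n+1}(B) *)
Definition Bfun (n : nat) (B : R) : R :=
  INR (2 * n + 1) - B * Derive (Fq (2 * n + 1)) B / Fq (2 * n + 1) B.

Definition pw (n : nat) (t : R) : R := Rpower (1 - t) (INR n + / 2).

Definition U (n : nat) (Bs t x : R) : R :=
  if Rlt_dec x (Bs * sqrt (1 - t)) then
    pw n t * Bs ^ (2 * n + 1) * Fq (2 * n + 1) (x / sqrt (1 - t))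
      / Fq (2 * n + 1) Bs
  else x ^ (2 * n + 1).

Definition g (n : nat) (Bs t x : R) : R :=
  if Rle_dec x 0 then U n Bs t x - x ^ (2 * n + 1)
  else U n Bs t (- x) + x ^ (2 * n + 1).

Definition jfun (n : nat) (Bs D : R) : R :=
  / (Fq (2 * n + 1) D + Gq (2 * n + 1) D) *
  (D ^ (2 * n + 1) + Bs ^ (2 * n + 1) * Gq (2 * n + 1) D / Fq (2 * n + 1) Bs).

Definition Jstar (n : nat) (Bs t x : R) : R :=
  if Rlt_dec (Rabs x) (Bs * sqrt (1 - t)) then
    pw n t * (Fq (2 * n + 1) (x / sqrt (1 - t)) + Gq (2 * n + 1) (x / sqrt (1 - t)))
      * jfun n Bs Bs
  else g n Bs t x.

Definition Lop (xi : R -> R -> R) (t x : R) : R :=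
  Derive (fun s => xi s x) t - x / (1 - t) * Derive (fun y => xi t y) x
  + / 2 * Derive_n (fun y => xi t y) 2 x.

Definition L_defined (xi : R -> R -> R) (t x : R) : Prop :=
  ex_derive (fun s => xi s x) t /\ ex_derive (fun y => xi t y) x /\
  ex_derive_n (fun y => xi t y) 2 x.

(* Main.v *)
Require Import Defs.
From Stdlib Require Import Reals Lra Lia Psatz.
From Coquelicot Require Import Coquelicot.
Open Scope R_scope.


Lemma exp_le_mono a b : a <= b -> exp a <= exp b.
Proof. intros [H|H]. left; now apply exp_increasing. right; now subst. Qed.

Definition ff (k : nat) (y u : R) : R := u ^ k * exp (y * u - u ^ 2 / 2).
Definition II (k : nat) (y M : R) : R := RInt (ff k y) 0 M.
Definition Kb (k : nat) (y : R) : R := exp ((Rabs y + INR k + 1) ^ 2 / 2).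

Lemma ff_cont k y u : continuous (ff k y) u.
Proof. apply (ex_derive_continuous (ff k y)). unfold ff. auto_derive. auto. Qed.

Lemma ff_exR k y a b : ex_RInt (ff k y) a b.
Proof. apply (@ex_RInt_continuous R_CompleteNormedModule). intros; apply ff_cont. Qed.

Lemma pow_le_exp u k : 0 <= u -> u ^ k <= exp (INR k * u).
Proof.
  intro Hu. induction k as [|k IH].
  - simpl. rewrite Rmult_0_l, exp_0. lra.
  - rewrite S_INR. replace ((INR k + 1) * u) with (u + INR k * u) by ring.
    rewrite exp_plus. simpl. apply Rmult_le_compat; auto.
    + apply pow_le; auto.
    + pose proof (exp_ineq1_le u); lra.
Qed.

Lemma ff_nonneg k y u : 0 <= u -> 0 <= ff k y u.
Proof. intro; unfold ff. apply Rmult_le_pos. apply pow_le; auto. left; apply exp_pos. Qed.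

Lemma ff_bound k y u : 0 <= u -> ff k y u <= Kb k y * exp (- u).
Proof.
  intro Hu. unfold ff, Kb. rewrite <- exp_plus.
  apply Rle_trans with (exp (INR k * u) * exp (y * u - u ^ 2 / 2)).
  - apply Rmult_le_compat_r. left; apply exp_pos. now apply pow_le_exp.
  - rewrite <- exp_plus. apply exp_le_mono.
    assert (y * u <= Rabs y * u).
    { apply Rmult_le_compat_r; auto. apply Rle_abs. }
    set (a := Rabs y + INR k). replace (Rabs y + INR k + 1) with (a + 1) by (unfold a; ring).
    assert (0 <= (u - (a+1))^2) by (apply pow2_ge_0).
    unfold a in *. nra.
Qed.

Lemma int_exp M : 0 <= M -> is_RInt (fun u => exp (- u)) 0 M (1 - exp (- M)).
Proof.
  intro HM.
  replace (1 - exp (-M)) with (minus ((fun u => - exp (- u)) M) ((fun u => - exp (-u)) 0)).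
  2:{ simpl. rewrite Ropp_0, exp_0. unfold minus, plus, opp; simpl. ring. }
  apply (@is_RInt_derive R_CompleteNormedModule (fun u => - exp (-u)) (fun u => exp (-u)) 0 M).
  - intros x _. auto_derive. auto. ring.
  - intros x _. apply (@ex_derive_continuous R_AbsRing R_NormedModule). auto_derive. auto.
Qed.

Lemma ex_RInt_exp a b : ex_RInt (fun u => exp (- u)) a b.
Proof. apply (@ex_RInt_continuous R_CompleteNormedModule). intros; apply (@ex_derive_continuous R_AbsRing R_NormedModule). auto_derive; auto. Qed.

Lemma RInt_Kexp_le K M : 0 <= K -> 0 <= M -> RInt (fun u => K * exp (- u)) 0 M <= K.
Proof.
  intros HK HM.
  assert (E: RInt (fun u => K * exp (- u)) 0 M = K * (1 - exp (- M))).
  { rewrite <- (is_RInt_unique _ _ _ _ (int_exp M HM)).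
    apply (RInt_scal (fun u => exp (-u)) 0 M K). apply ex_RInt_exp. }
  rewrite E. pose proof (exp_pos (-M)). nra.
Qed.

Lemma ex_RInt_Kexp K a b : ex_RInt (fun u => K * exp (- u)) a b.
Proof. apply (@ex_RInt_continuous R_CompleteNormedModule). intros; apply (@ex_derive_continuous R_AbsRing R_NormedModule). auto_derive; auto. Qed.

Lemma Kb_pos k y : 0 < Kb k y.
Proof. apply exp_pos. Qed.

Lemma II_bound k y M : 0 <= M -> 0 <= II k y M <= Kb k y.
Proof.
  intro HM. unfold II. split.
  - apply RInt_ge_0; auto. apply ff_exR. intros; apply ff_nonneg; lra.
  - eapply Rle_trans. 2: apply (RInt_Kexp_le (Kb k y) M); [left; apply Kb_pos|auto].
    apply RInt_le; auto. apply ff_exR. apply ex_RInt_Kexp.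
    intros; apply ff_bound; lra.
Qed.

Lemma II_mono k y M1 M2 : 0 <= M1 <= M2 -> II k y M1 <= II k y M2.
Proof.
  intros H. unfold II.
  rewrite <- (RInt_Chasles (ff k y) 0 M1 M2) by apply ff_exR.
  assert (0 <= RInt (ff k y) M1 M2).
  { apply RInt_ge_0; [lra|apply ff_exR|]. intros; apply ff_nonneg; lra. }
  unfold plus; simpl. lra.
Qed.

Lemma mono_lim (I : R -> R) K :
  (forall M, 0 <= M -> I M <= K) ->
  (forall M1 M2, 0 <= M1 <= M2 -> I M1 <= I M2) ->
  exists l : R, is_lim I p_infty l.
Proof.
  intros HK Hm.
  set (E := fun v => exists M, 0 <= M /\ v = I M).
  assert (Hb : bound E). { exists K. intros v [M [HM ->]]. auto. }
  assert (He : exists v, E v). { exists (I 0). exists 0. split; auto; lra. }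
  destruct (completeness E Hb He) as [l [Hub Hlub]].
  exists l. apply is_lim_spec. intros eps.
  assert (exists M0, 0 <= M0 /\ l - eps < I M0).
  { apply Classical_Prop.NNPP. intro Hn.
    assert (is_upper_bound E (l - eps)).
    { intros v [M [HM ->]]. apply Rnot_lt_le. intro Hc. apply Hn. exists M; auto. }
    specialize (Hlub _ H). pose proof (cond_pos eps). lra. }
  destruct H as [M0 [HM0 Hlt]].
  exists M0. intros M HM.
  assert (I M0 <= I M) by (apply Hm; lra).
  assert (I M <= l) by (apply Hub; exists M; split; auto; lra).
  apply Rabs_def1; lra.
Qed.

Lemma gen_from_lim f (I : R -> R) (l : R) :
  (forall M, 0 <= M -> is_RInt f 0 M (I M)) -> is_lim I p_infty l ->
  is_RInt_gen f (at_point 0) (Rbar_locally p_infty) l.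
Proof.
  intros HI HL P HP.
  destruct (HL P HP) as [M HM].
  apply (Filter_prod _ _ _ (fun a => a = 0) (fun b => Rmax 0 M < b)).
  - reflexivity.
  - exists (Rmax 0 M). auto.
  - intros a b -> Hb. exists (I b). split.
    + apply HI. pose proof (Rmax_l 0 M); simpl; lra.
    + apply HM. pose proof (Rmax_r 0 M); lra.
Qed.

Lemma II_lim k y : is_lim (II k y) p_infty (Fq (S k) y).
Proof.
  destruct (mono_lim (II k y) (Kb k y)) as [l Hl].
  - intros; apply II_bound; auto.
  - intros; apply II_mono; auto.
  - replace (Fq (S k) y) with l; auto.
    unfold Fq. replace (S k - 1)%nat with k by lia.
    symmetry. apply is_RInt_gen_unique.
    apply (gen_from_lim _ (II k y)); auto.
    intros M _. unfold II. apply (@RInt_correct R_CompleteNormedModule). apply ff_exR.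
Qed.

Lemma lim_uniq (f : R -> R) (l1 l2 : R) : is_lim f p_infty l1 -> is_lim f p_infty l2 -> l1 = l2.
Proof.
  intros H1 H2. apply is_lim_unique in H1. apply is_lim_unique in H2.
  rewrite H1 in H2. now injection H2.
Qed.

Lemma lim_le_const (f : R -> R) (l c : R) : is_lim f p_infty l ->
  (forall M, 0 <= M -> f M <= c) -> l <= c.
Proof.
  intros H Hc. assert (Rbar_le l c).
  { apply (is_lim_le_loc f (fun _ => c) p_infty); auto.
    exists 0. intros; apply Hc; lra. apply is_lim_const. }
  exact H0.
Qed.

Lemma lim_ge_const (f : R -> R) (l c : R) : is_lim f p_infty l ->
  (forall M, 0 <= M -> c <= f M) -> c <= l.
Proof.
  intros H Hc. assert (Rbar_le c l).
  { apply (is_lim_le_loc (fun _ => c) f p_infty); auto.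
    exists 0. intros; apply Hc; lra. apply is_lim_const. }
  exact H0.
Qed.

Lemma Fq_nonneg k y : 0 <= Fq (S k) y.
Proof. apply (lim_ge_const (II k y)). apply II_lim. intros; apply II_bound; auto. Qed.

Lemma RInt_comb k y a b c M :
  RInt (fun u => a * ff k y u + b * ff (S k) y u + c * ff (S (S k)) y u) 0 M
  = a * II k y M + b * II (S k) y M + c * II (S (S k)) y M.
Proof.
  apply is_RInt_unique. unfold II.
  pose proof (@RInt_correct R_CompleteNormedModule (ff k y) 0 M (ff_exR _ _ _ _)) as H0.
  pose proof (@RInt_correct R_CompleteNormedModule (ff (S k) y) 0 M (ff_exR _ _ _ _)) as H1.
  pose proof (@RInt_correct R_CompleteNormedModule (ff (S (S k)) y) 0 M (ff_exR _ _ _ _)) as H2.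
  apply (is_RInt_scal _ _ _ a) in H0.
  apply (is_RInt_scal _ _ _ b) in H1.
  apply (is_RInt_scal _ _ _ c) in H2.
  pose proof (is_RInt_plus _ _ _ _ _ _ (is_RInt_plus _ _ _ _ _ _ H0 H1) H2) as H.
  exact H.
Qed.

Lemma lim_comb k y a b c :
  is_lim (fun M => a * II k y M + b * II (S k) y M + c * II (S (S k)) y M) p_infty
    (a * Fq (S k) y + b * Fq (S (S k)) y + c * Fq (S (S (S k))) y).
Proof.
  apply is_lim_plus'; [apply is_lim_plus'|];
  apply (is_lim_scal_l _ _ p_infty (Finite _)); apply II_lim.
Qed.

Lemma exp_m_lim : is_lim (fun M => exp (- M)) p_infty 0.
Proof.
  apply (is_lim_comp exp (fun M => - M) p_infty 0 m_infty).
  - apply is_lim_exp_m.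
  - apply (is_lim_opp (fun M => M) p_infty p_infty). apply is_lim_id.
  - exists 0. intros; discriminate.
Qed.

Lemma ff_lim0 k y : is_lim (ff k y) p_infty 0.
Proof.
  apply (is_lim_le_le_loc (fun _ => 0) (fun M => Kb k y * exp (- M))).
  - exists 0. intros M HM. split. apply ff_nonneg; lra. apply ff_bound; lra.
  - apply is_lim_const.
  - replace (Finite 0) with (Rbar_mult (Kb k y) 0) by (simpl; f_equal; ring).
    apply is_lim_scal_l. apply exp_m_lim.
Qed.

Lemma II_rec k y M : 0 <= M ->
  II (S (S k)) y M = y * II (S k) y M + INR (S k) * II k y M - ff (S k) y M.
Proof.
  intro HM.
  assert (HD : is_RInt (fun u => INR (S k) * ff k y u + y * ff (S k) y u + (-1) * ff (S (S k)) y u) 0 M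
                 (ff (S k) y M)).
  { replace (ff (S k) y M) with (minus (ff (S k) y M) (ff (S k) y 0)).
    2:{ unfold ff, minus, plus, opp; simpl. ring. }
    apply (@is_RInt_derive R_CompleteNormedModule).
    - intros x _. unfold ff. auto_derive. auto.
      change (match k with 0%nat => 1 | S _ => INR k + 1 end) with (INR (S k)).
      replace (y * x + - (x * (x * 1) * / 2)) with (y * x - x ^ 2 / 2) by (simpl; field). simpl; field.
    - intros x _. apply (@ex_derive_continuous R_AbsRing R_NormedModule).
      unfold ff. auto_derive. auto. }
  apply (@is_RInt_unique R_CompleteNormedModule) in HD. rewrite RInt_comb in HD. lra.
Qed.

Lemma Fq_rec k y :
  Fq (S (S (S k))) y = y * Fq (S (S k)) y + INR (S k) * Fq (S k) y.
Proof.
  assert (H : is_lim (fun M => INR (S k) * II k y M + y * II (S k) y M + (-1) * II (S (S k)) y M)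
      p_infty (ff (S k) y 0 * 0 + 0)).
  { apply (is_lim_ext_loc (fun M => ff (S k) y M * 1 + 0)).
    - exists 0. intros M HM. rewrite (II_rec k y M) by lra. ring.
    - apply is_lim_plus'. apply (is_lim_ext (fun M => ff (S k) y M)).
      intros; ring. replace (ff (S k) y 0 * 0) with 0 by ring. apply ff_lim0.
      apply is_lim_const. }
  pose proof (lim_uniq _ _ _ H (lim_comb k y _ _ _)). lra.
Qed.

Lemma Fq_CS k y lam :
  0 <= Fq (S (S (S k))) y - 2 * lam * Fq (S (S k)) y + lam ^ 2 * Fq (S k) y.
Proof.
  replace (Fq (S (S (S k))) y - 2 * lam * Fq (S (S k)) y + lam ^ 2 * Fq (S k) y)
    with (lam^2 * Fq (S k) y + (-2 * lam) * Fq (S (S k)) y + 1 * Fq (S (S (S k))) y) by ring.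
  apply (lim_ge_const _ _ _ (lim_comb k y _ _ _)).
  intros M HM. rewrite <- RInt_comb. apply RInt_ge_0; auto.
  apply (@ex_RInt_continuous R_CompleteNormedModule). intros.
  apply (@ex_derive_continuous R_AbsRing R_NormedModule). unfold ff; auto_derive; auto.
  intros u Hu. unfold ff. set (E := exp _).
  assert (H : 0 <= u ^ k * E * (u - lam)^2).
  { apply Rmult_le_pos. apply Rmult_le_pos. apply pow_le; lra. left; apply exp_pos.
    apply pow2_ge_0. }
  apply Rle_trans with (1 := H). right. simpl. ring.
Qed.

Lemma exp_taylor2 a : Rabs (exp a - 1 - a) <= a ^ 2 * exp (Rabs a).
Proof.
  pose proof (exp_ineq1_le a) as H0.
  rewrite Rabs_pos_eq by lra.
  destruct (Rle_or_lt 0 a) as [Ha|Ha].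
  - rewrite Rabs_pos_eq by lra.
    pose proof (exp_ineq1_le (-a)) as H1.
    assert (Hm : exp a * exp (- a) = 1) by (rewrite <- exp_plus; replace (a + - a) with 0 by ring; apply exp_0).
    assert (H2 : exp a - 1 <= a * exp a).
    { pose proof (exp_pos a). nra. }
    assert (0 <= exp a - 1) by lra.
    nra.
  - rewrite Rabs_left by lra.
    pose proof (exp_ineq1_le (-a)) as H1.
    assert (Hm : exp a * exp (- a) = 1) by (rewrite <- exp_plus; replace (a + - a) with 0 by ring; apply exp_0).
    assert (H3 : exp a * (1 - a) <= 1) by (pose proof (exp_pos a); nra).
    assert (H4 : exp a - 1 - a <= a ^ 2).
    { assert (exp a <= / (1 - a)).
      { apply (Rmult_le_reg_r (1 - a)). lra. rewrite Rinv_l by lra. lra. }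
      assert (/ (1 - a) - 1 - a = a ^ 2 / (1 - a)) by (field; lra).
      assert (a ^ 2 / (1 - a) <= a ^ 2).
      { unfold Rdiv. assert (0 <= a^2) by nra.
        assert (/ (1 - a) <= 1). { apply Rmult_le_reg_r with (1 - a). lra. rewrite Rinv_l by lra. lra. }
        assert (0 < / (1 - a)) by (apply Rinv_0_lt_compat; lra). nra. }
      lra. }
    assert (1 <= exp (- a)) by lra.
    assert (0 <= a ^ 2) by nra. nra.
Qed.

Lemma ff_diff_pt k y h u : Rabs h <= 1 -> 0 <= u ->
  Rabs (ff k (y + h) u - ff k y u - h * ff (S k) y u) <= h ^ 2 * ff (S (S k)) (Rabs y + 1) u.
Proof.
  intros Hh Hu. unfold ff.
  set (E := exp (y * u - u ^ 2 / 2)).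
  replace (u ^ k * exp ((y + h) * u - u ^ 2 / 2) - u ^ k * E - h * (u ^ S k * E))
    with (u ^ k * E * (exp (h * u) - 1 - h * u)).
  2:{ unfold E. replace ((y + h) * u - u ^ 2 / 2) with ((y * u - u ^ 2 / 2) + h * u) by ring.
      rewrite exp_plus. simpl. ring. }
  rewrite Rabs_mult. rewrite (Rabs_pos_eq (u ^ k * E)).
  2:{ apply Rmult_le_pos. apply pow_le; auto. left; apply exp_pos. }
  eapply Rle_trans.
  { apply Rmult_le_compat_l. apply Rmult_le_pos. apply pow_le; auto. left; apply exp_pos.
    apply exp_taylor2. }
  assert (HE : E * exp (Rabs (h * u)) <= exp ((Rabs y + 1) * u - u ^ 2 / 2)).
  { unfold E. rewrite <- exp_plus. apply exp_le_mono.
    rewrite Rabs_mult, (Rabs_pos_eq u) by auto.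
    assert (y * u <= Rabs y * u) by (apply Rmult_le_compat_r; auto; apply Rle_abs).
    assert (Rabs h * u <= 1 * u) by (apply Rmult_le_compat_r; auto). lra. }
  replace (u ^ k * E * ((h * u) ^ 2 * exp (Rabs (h * u))))
    with (h ^ 2 * u ^ S (S k) * (E * exp (Rabs (h * u)))) by (simpl; ring).
  apply Rle_trans with (h ^ 2 * u ^ S (S k) * exp ((Rabs y + 1) * u - u ^ 2 / 2)).
  apply Rmult_le_compat_l; auto.
  apply Rmult_le_pos. apply pow2_ge_0. apply pow_le; auto.
  right; ring.
Qed.

Lemma II_diff_bound k y h M : Rabs h <= 1 -> 0 <= M ->
  Rabs (II k (y + h) M - II k y M - h * II (S k) y M) <= h ^ 2 * Kb (S (S k)) (Rabs y + 1).
Proof.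
  intros Hh HM.
  set (g := fun u => ff k (y + h) u - ff k y u - h * ff (S k) y u).
  assert (Hg : RInt g 0 M = II k (y + h) M - II k y M - h * II (S k) y M).
  { apply (@is_RInt_unique R_CompleteNormedModule). unfold II.
    pose proof (@RInt_correct R_CompleteNormedModule (ff k (y+h)) 0 M (ff_exR _ _ _ _)) as H0.
    pose proof (@RInt_correct R_CompleteNormedModule (ff k y) 0 M (ff_exR _ _ _ _)) as H1.
    pose proof (@RInt_correct R_CompleteNormedModule (ff (S k) y) 0 M (ff_exR _ _ _ _)) as H2.
    apply (is_RInt_scal _ _ _ h) in H2.
    exact (is_RInt_minus _ _ _ _ _ _ (is_RInt_minus _ _ _ _ _ _ H0 H1) H2). }
  rewrite <- Hg.
  set (c := h ^ 2 * Kb (S (S k)) (Rabs y + 1)).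
  assert (Hc : 0 <= c) by (apply Rmult_le_pos; [apply pow2_ge_0|left; apply Kb_pos]).
  assert (Hpt : forall u, 0 <= u -> Rabs (g u) <= c * exp (- u)).
  { intros u Hu. eapply Rle_trans. apply ff_diff_pt; auto.
    unfold c. rewrite Rmult_assoc. apply Rmult_le_compat_l. apply pow2_ge_0.
    apply ff_bound; auto. }
  assert (exg : ex_RInt g 0 M).
  { apply (@ex_RInt_continuous R_CompleteNormedModule). intros.
    apply (@ex_derive_continuous R_AbsRing R_NormedModule). unfold g, ff. auto_derive; auto. }
  assert (exm : ex_RInt (fun u => - (c * exp (- u))) 0 M).
  { apply (@ex_RInt_continuous R_CompleteNormedModule). intros.
    apply (@ex_derive_continuous R_AbsRing R_NormedModule). auto_derive; auto. }
  assert (RInt (fun u => - (c * exp (- u))) 0 M = - RInt (fun u => c * exp (- u)) 0 M).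
  { apply (@RInt_opp R_CompleteNormedModule). apply ex_RInt_Kexp. }
  pose proof (RInt_Kexp_le c M Hc HM).
  apply Rabs_le. split.
  - eapply Rle_trans. 2: apply (RInt_le (fun u => - (c * exp (- u))) g 0 M HM exm exg).
    lra. intros u Hu. pose proof (Hpt u ltac:(lra)). apply Rabs_le_between in H1. lra.
  - eapply Rle_trans. apply (RInt_le g (fun u => c * exp (- u)) 0 M HM exg (ex_RInt_Kexp _ _ _)).
    intros u Hu. pose proof (Hpt u ltac:(lra)). apply Rabs_le_between in H1. lra.
    lra.
Qed.

Lemma Fq_derive k y : is_derive (Fq (S k)) y (Fq (S (S k)) y).
Proof.
  apply is_derive_Reals. intros eps Heps.
  set (K := Kb (S (S k)) (Rabs y + 1)).
  assert (HK : 0 < K) by apply Kb_pos.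
  assert (Hd : 0 < Rmin 1 (eps / K)) by (apply Rmin_pos; [lra| apply Rdiv_lt_0_compat; lra]).
  exists (mkposreal _ Hd). intros h Hh0 Hh. simpl in Hh.
  assert (Hh1 : Rabs h <= 1) by (pose proof (Rmin_l 1 (eps / K)); lra).
  assert (Hh2 : Rabs h < eps / K) by (pose proof (Rmin_r 1 (eps / K)); lra).
  set (d := Fq (S k) (y + h) - Fq (S k) y - h * Fq (S (S k)) y).
  assert (Hl : is_lim (fun M => II k (y + h) M - II k y M - h * II (S k) y M) p_infty d).
  { apply is_lim_minus'. apply is_lim_minus'; apply II_lim.
    apply (is_lim_scal_l _ _ p_infty (Finite _)). apply II_lim. }
  assert (Hb : Rabs d <= h ^ 2 * K).
  { apply Rabs_le.
    pose proof (fun M HM => proj1 (Rabs_le_between _ _) (II_diff_bound k y h M Hh1 HM)) as HB.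
    split.
    - apply (lim_ge_const _ _ _ Hl). intros M HM. apply (HB M HM).
    - apply (lim_le_const _ _ _ Hl). intros M HM. apply (HB M HM). }
  replace ((Fq (S k) (y + h) - Fq (S k) y) / h - Fq (S (S k)) y) with (d / h)
    by (unfold d; field; auto).
  unfold Rdiv. rewrite Rabs_mult, Rabs_inv.
  assert (0 < Rabs h) by (apply Rabs_pos_lt; auto).
  apply Rle_lt_trans with (Rabs h * K).
  - apply (Rmult_le_reg_r (Rabs h)); auto. rewrite Rmult_assoc, Rinv_l by lra.
    replace (Rabs h * K * Rabs h) with (h ^ 2 * K). lra.
    rewrite <- (pow2_abs h). ring.
  - apply (Rmult_lt_reg_r (/ K)). apply Rinv_0_lt_compat; auto.
    replace (Rabs h * K * / K) with (Rabs h) by (field; lra). exact Hh2.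
Qed.

Lemma P_der n t : t < 1 -> is_derive (pw n) t (- (INR n + /2) * pw n t / (1 - t)).
Proof.
  intros. unfold pw, Rpower. auto_derive. lra.
  replace (1 + - t) with (1 - t) by ring. field. lra.
Qed.

Lemma sqrt_facts t : t < 1 -> 0 < sqrt (1 - t) /\ sqrt (1 - t) * sqrt (1 - t) = 1 - t.
Proof. intros. split. apply sqrt_lt_R0; lra. apply sqrt_sqrt; lra. Qed.

Lemma Lop_local (xi : R -> R -> R) (A A1 A2 : R -> R) (c e : R) n t x :
  (forall w, is_derive A w (A1 w)) -> (forall w, is_derive A1 w (A2 w)) ->
  (forall w, A2 w = w * A1 w + INR (2*n+1) * A w) -> t < 1 ->
  locally t (fun s => xi s x = c * pw n s * A (x * / sqrt (1 - s)) + e * x ^ (2*n+1)) ->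
  locally x (fun y => xi t y = c * pw n t * A (y * / sqrt (1 - t)) + e * y ^ (2*n+1)) ->
  L_defined xi t x /\
  Lop xi t x = e * (- x / (1 - t) * (INR (2*n+1) * x ^ (2*n))
                    + / 2 * (INR (2*n+1) * (INR (2*n) * x ^ (pred (2*n))))).
Proof.
  intros HA HA1 Hode Ht Hlt Hlx.
  destruct (sqrt_facts t Ht) as [Hs Hss].
  set (s := sqrt (1 - t)) in *.
  set (R0 := / s).
  assert (HR : R0 * R0 = / (1 - t)). { unfold R0. rewrite <- Hss. field. lra. }
  assert (HDA : forall w, Derive (fun z => A z) w = A1 w).
  { intro w. apply is_derive_unique. apply HA. }
  assert (HDA1 : forall w, Derive (fun z => A1 z) w = A2 w).
  { intro w. apply is_derive_unique. apply HA1. }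
  assert (HDP : Derive (fun z => pw n z) t = - (INR n + /2) * pw n t / (1 - t)).
  { apply is_derive_unique. apply P_der; auto. }
  set (Dt := c * (- (INR n + /2) * pw n t / (1 - t) * A (x * R0)
                  + pw n t * (A1 (x * R0) * (x * (R0 / (2 * (1 - t))))))).
  set (D1 := fun y => c * pw n t * (A1 (y * R0) * R0) + e * (INR (2*n+1) * y ^ (2*n))).
  set (D2 := fun y => c * pw n t * (A2 (y * R0) * (R0 * R0))
                      + e * (INR (2*n+1) * (INR (2*n) * y ^ (pred (2*n))))).
  assert (Hdt : is_derive (fun s' => c * pw n s' * A (x * / sqrt (1 - s')) + e * x ^ (2*n+1)) t Dt).
  { auto_derive.
    all: replace (1 + - t) with (1 - t) by ring; fold s.
    - split. eexists; apply P_der; auto. split. eexists; apply HA. repeat split; lra.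
    - rewrite HDA, HDP. fold R0. unfold Dt. unfold R0. rewrite <- Hss. field. lra. }
  assert (Hd1 : forall y, is_derive (fun y => c * pw n t * A (y * / sqrt (1 - t)) + e * y ^ (2*n+1)) y (D1 y)).
  { intro y. auto_derive.
    - exists (A1 (y * / sqrt (1 - t))). apply HA.
    - rewrite HDA. fold s R0. unfold D1.
      replace (n + (n + 0))%nat with (2 * n)%nat by lia.
      replace (Init.Nat.pred (2 * n + 1)) with (2 * n)%nat by lia. ring. }
  assert (Hd2 : forall y, is_derive D1 y (D2 y)).
  { intro y. unfold D1. auto_derive.
    - exists (A2 (y * R0)). apply HA1.
    - rewrite HDA1. unfold D2. try replace (n + (n + 0))%nat with (2 * n)%nat by lia. ring. }
  assert (HLx : locally x (fun y => c * pw n t * A (y * / sqrt (1 - t)) + e * y ^ (2*n+1) = xi t y)).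
  { eapply filter_imp. 2: exact Hlx. intros; auto. }
  assert (HLt : locally t (fun s' => c * pw n s' * A (x * / sqrt (1 - s')) + e * x ^ (2*n+1) = xi s' x)).
  { eapply filter_imp. 2: exact Hlt. intros; auto. }
  assert (HDx : forall y, Derive (fun y => c * pw n t * A (y * / sqrt (1 - t)) + e * y ^ (2*n+1)) y = D1 y).
  { intro y. apply is_derive_unique. apply Hd1. }
  assert (Hn2 : Derive_n (fun y => c * pw n t * A (y * / sqrt (1 - t)) + e * y ^ (2*n+1)) 2 x = D2 x).
  { simpl. rewrite (Derive_ext _ D1) by exact HDx. apply is_derive_unique. apply Hd2. }
  split.
  - split; [|split].
    + apply (ex_derive_ext_loc _ _ t HLt). eexists; exact Hdt.
    + apply (ex_derive_ext_loc _ _ x HLx). eexists; apply Hd1.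
    + apply (ex_derive_n_ext_loc _ _ 2 x HLx). simpl.
      apply (ex_derive_ext D1). intro y; symmetry; apply HDx. eexists; apply Hd2.
  - unfold Lop.
    assert (E1 : Derive (fun s' => xi s' x) t = Dt).
    { rewrite <- (is_derive_unique _ _ _ Hdt). symmetry. apply Derive_ext_loc. exact HLt. }
    assert (E2 : Derive (fun y => xi t y) x = D1 x).
    { rewrite <- HDx. symmetry. apply Derive_ext_loc. exact HLx. }
    assert (E3 : Derive_n (fun y => xi t y) 2 x = D2 x).
    { rewrite <- Hn2. symmetry. apply Derive_n_ext_loc. exact HLx. }
    rewrite E1, E2, E3.
    unfold D1, D2, Dt. rewrite HR, Hode.
    assert (Hm : INR (2 * n + 1) = 2 * (INR n + / 2)) by (rewrite plus_INR, mult_INR; simpl; field).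
    rewrite Hm. field. lra.
Qed.

Lemma Bs_bound n Bs : 0 < Bs -> Bfun n Bs = 0 ->
  0 < Fq (2*n+1) Bs /\ INR n + / 2 <= Bs ^ 2.
Proof.
  intros HB H. unfold Bfun in H.
  replace (2*n+1)%nat with (S (2*n)) in * by lia.
  rewrite (is_derive_unique _ _ _ (Fq_derive (2*n) Bs)) in H.
  pose proof (Fq_rec (2*n) Bs) as Hrec.
  set (F0 := Fq (S (2*n)) Bs) in *.
  set (F1 := Fq (S (S (2*n))) Bs) in *.
  set (F2 := Fq (S (S (S (2*n)))) Bs) in *.
  set (q := INR (S (2*n))) in *.
  assert (Hq : 0 < q) by (apply lt_0_INR; lia).
  assert (HqE : q = 2 * (INR n + /2)) by (unfold q; rewrite S_INR, mult_INR; simpl; field).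
  assert (HF0 : 0 < F0).
  { destruct (Fq_nonneg (2*n) Bs) as [Hp|Hz]; auto. exfalso.
    fold F0 in Hz. rewrite <- Hz in H. unfold Rdiv in H. rewrite Rinv_0 in H. lra. }
  split; auto.
  assert (H1 : F1 = q * F0 / Bs).
  { apply (Rmult_eq_reg_r (/ F0)). 2: apply Rinv_neq_0_compat; lra.
    apply (Rmult_eq_reg_l Bs). 2: lra.
    replace (Bs * (q * F0 / Bs * / F0)) with q by (field; lra). lra. }
  pose proof (Fq_CS (2*n) Bs (q / Bs)) as Hcs. fold F0 F1 F2 in Hcs.
  rewrite Hrec, H1 in Hcs.
  destruct (Rle_or_lt 0 (2 * Bs ^ 2 - q)) as [Hok|Hbad].
  - rewrite HqE in Hok. lra.
  - exfalso.
    assert (0 < q * F0 / Bs ^ 2) by (apply Rdiv_lt_0_compat; [nra| apply pow_lt; lra]).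
    assert (q * F0 / Bs ^ 2 * (2 * Bs ^ 2 - q) < 0).
    { apply Ropp_lt_cancel. rewrite Ropp_0. replace (- (q * F0 / Bs ^ 2 * (2 * Bs ^ 2 - q))) with
        (q * F0 / Bs ^ 2 * (- (2 * Bs ^ 2 - q))) by ring. apply Rmult_lt_0_compat; lra. }
    replace (Bs * (q * F0 / Bs) + q * F0 - 2 * (q / Bs) * (q * F0 / Bs) + (q / Bs) ^ 2 * F0)
      with (q * F0 / Bs ^ 2 * (2 * Bs ^ 2 - q)) in Hcs by (field; lra).
    lra.
Qed.

Lemma loc_pos (g : R -> R) z : continuous g z -> 0 < g z -> locally z (fun u => 0 < g u).
Proof.
  intros Hc Hp. apply Hc. exists (mkposreal _ Hp). intros v Hv.
  unfold ball in Hv; simpl in Hv; unfold AbsRing_ball, abs, minus, plus, opp in Hv; simpl in Hv.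
  apply Rabs_lt_between' in Hv. lra.
Qed.

Lemma poly_sign n e x t : t < 1 -> 0 < e * x -> INR n + / 2 <= x ^ 2 / (1 - t) ->
  e * (- x / (1 - t) * (INR (2*n+1) * x ^ (2*n))
       + / 2 * (INR (2*n+1) * (INR (2*n) * x ^ (pred (2*n))))) <= 0.
Proof.
  intros Ht Hex Hq.
  destruct n as [|n'].
  - simpl. replace (e * (- x / (1 - t) * (1 * 1) + / 2 * (1 * (0 * 1)))) with (- (e * x) / (1 - t))
      by (field; lra).
    unfold Rdiv. rewrite <- Ropp_mult_distr_l. apply Ropp_le_cancel. rewrite Ropp_0, Ropp_involutive.
    left. apply Rmult_lt_0_compat; auto. apply Rinv_0_lt_compat; lra.
  - replace (pred (2 * S n')) with (S (2 * n')) by lia.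
    replace (2 * S n')%nat with (S (S (2 * n'))) by lia.
    set (w := x ^ (2 * n')).
    assert (Hw : 0 <= w). { unfold w. rewrite pow_mult. apply pow_le. nra. }
    set (m := INR (S (S (2*n')) + 1)).
    assert (Hm : 0 < m) by (apply lt_0_INR; lia).
    assert (HS : INR (S (S (2 * n'))) = 2 * INR (S n')) by (rewrite !S_INR, mult_INR; simpl; ring).
    replace (x ^ S (S (2 * n'))) with (x * (x * w)) by (unfold w; simpl; ring).
    replace (x ^ S (2 * n')) with (x * w) by (unfold w; simpl; ring).
    replace (x ^ 2 / (1 - t)) with (x * x / (1 - t)) in Hq by (simpl; field; lra).
    rewrite HS.
    replace (e * (- x / (1 - t) * (m * (x * (x * w))) + / 2 * (m * (2 * INR (S n') * (x * w)))))
      with ((e * x) * w * m * (INR (S n') - x * x / (1 - t))) by (field; lra).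
    assert (INR (S n') - x * x / (1 - t) < 0) by lra.
    assert (0 <= e * x * w) by (apply Rmult_le_pos; lra).
    assert (0 <= e * x * w * m) by (apply Rmult_le_pos; lra).
    set (a := e * x * w * m) in *. set (d := INR (S n') - x * x / (1 - t)) in *.
    assert (a * d <= a * 0) by (apply Rmult_le_compat_l; lra).
    lra.
Qed.

Lemma deriv_neg (f f' : R -> R) : (forall w, is_derive f w (f' w)) ->
  forall w, is_derive (fun z => f (- z)) w (- f' (- w)).
Proof.
  intros H w.
  assert (Ho : is_derive (fun z : R => - z) w (-1)) by (auto_derive; auto; ring).
  pose proof (is_derive_comp f (fun z => - z) w (f' (- w)) (-1) (H (- w)) Ho) as K.
  replace (- f' (- w)) with (scal (-1) (f' (- w))). exact K.
  unfold scal; simpl; unfold mult; simpl. ring.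
Qed.

Lemma deriv_plus (f f' g g' : R -> R) : (forall w, is_derive f w (f' w)) ->
  (forall w, is_derive g w (g' w)) -> forall w, is_derive (fun z => f z + g z) w (f' w + g' w).
Proof. intros Hf Hg w. exact (is_derive_plus f g w _ _ (Hf w) (Hg w)). Qed.

Theorem lemma4p6 (n : nat) (Bs : R)
  (HBpos : 0 < Bs)
  (HBzero : Bfun n Bs = 0)
  (HBuniq : forall B, 0 < B -> Bfun n B = 0 -> B = Bs) :
  (forall t x, 0 <= t < 1 -> Rabs x < Bs * sqrt (1 - t) ->
     L_defined (Jstar n Bs) t x /\ Lop (Jstar n Bs) t x = 0) /\
  (forall t x, 0 <= t < 1 -> Rabs x > Bs * sqrt (1 - t) ->
     L_defined (Jstar n Bs) t x /\ Lop (Jstar n Bs) t x <= 0).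
Proof.
  destruct (Bs_bound n Bs HBpos HBzero) as [HFB HB2].
  assert (HF : forall w, is_derive (Fq (2*n+1)) w (Fq (2*n+2) w)).
  { intro w. replace (2*n+1)%nat with (S (2*n)) by lia.
    replace (2*n+2)%nat with (S (S (2*n))) by lia. apply Fq_derive. }
  assert (HF1 : forall w, is_derive (Fq (2*n+2)) w (Fq (2*n+3) w)).
  { intro w. replace (2*n+2)%nat with (S (S (2*n))) by lia.
    replace (2*n+3)%nat with (S (S (S (2*n)))) by lia. apply Fq_derive. }
  assert (Hode : forall w, Fq (2*n+3) w = w * Fq (2*n+2) w + INR (2*n+1) * Fq (2*n+1) w).
  { intro w. replace (2*n+1)%nat with (S (2*n)) by lia.
    replace (2*n+2)%nat with (S (S (2*n))) by lia.
    replace (2*n+3)%nat with (S (S (S (2*n)))) by lia. apply Fq_rec. }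
  assert (HG := deriv_neg _ _ HF).
  assert (HG1 := deriv_neg _ _ HF1).
  assert (HG1' : forall w, is_derive (fun z => - Fq (2*n+2) (- z)) w (Fq (2*n+3) (- w))).
  { intro w. replace (Fq (2*n+3) (- w)) with (- - Fq (2*n+3) (- w)) by ring.
    apply (is_derive_opp (fun z => Fq (2*n+2) (- z))). apply HG1. }
  split.
  - intros t x [Ht0 Ht1] Hx.
    destruct (Lop_local (Jstar n Bs) (fun w => Fq (2*n+1) w + Fq (2*n+1) (- w))
                (fun w => Fq (2*n+2) w + - Fq (2*n+2) (- w))
                (fun w => Fq (2*n+3) w + Fq (2*n+3) (- w))
                (jfun n Bs Bs) 0 n t x) as [H1 H2].
    + apply deriv_plus; auto.
    + apply deriv_plus; auto.
    + intro w. rewrite !Hode. ring.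
    + auto.
    + assert (Hl : locally t (fun s => 0 < Bs * sqrt (1 - s) - Rabs x)).
      { apply loc_pos. apply (@ex_derive_continuous R_AbsRing R_NormedModule).
        auto_derive. lra. lra. }
      eapply filter_imp. 2: exact Hl. intros s Hs. unfold Jstar.
      destruct (Rlt_dec (Rabs x) (Bs * sqrt (1 - s))) as [_|C]; [|lra].
      unfold Gq, Rdiv. ring.
    + assert (Hl1 : locally x (fun y => 0 < Bs * sqrt (1 - t) - y)).
      { apply loc_pos. apply (@ex_derive_continuous R_AbsRing R_NormedModule).
        auto_derive. auto. pose proof (Rabs_def2 _ _ Hx); lra. }
      assert (Hl2 : locally x (fun y => 0 < Bs * sqrt (1 - t) + y)).
      { apply loc_pos. apply (@ex_derive_continuous R_AbsRing R_NormedModule).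
        auto_derive. auto. pose proof (Rabs_def2 _ _ Hx); lra. }
      eapply filter_imp. 2: exact (filter_and _ _ Hl1 Hl2). intros y [Hy1 Hy2]. unfold Jstar.
      destruct (Rlt_dec (Rabs y) (Bs * sqrt (1 - t))) as [_|C].
      * unfold Gq, Rdiv. ring.
      * exfalso. apply C. apply Rabs_def1; lra.
    + split; auto. rewrite H2. ring.
  - intros t x [Ht0 Ht1] Hx.
    assert (Hs0 : 0 <= sqrt (1 - t)) by apply sqrt_pos.
    assert (Hss : sqrt (1 - t) * sqrt (1 - t) = 1 - t) by (apply sqrt_sqrt; lra).
    assert (Hq : INR n + / 2 <= x ^ 2 / (1 - t)).
    { apply Rle_trans with (Bs ^ 2); auto.
      apply (Rmult_le_reg_r (1 - t)). lra.
      replace (x ^ 2 / (1 - t) * (1 - t)) with (Rabs x * Rabs x) by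
        (rewrite <- Rabs_mult; rewrite Rabs_pos_eq by nra; field; lra).
      assert (0 <= Bs * sqrt (1 - t)) by nra.
      replace (Bs ^ 2 * (1 - t)) with ((Bs * sqrt (1 - t)) * (Bs * sqrt (1 - t))) by
        (replace ((Bs * sqrt (1 - t)) * (Bs * sqrt (1 - t))) with (Bs ^ 2 * (sqrt (1 - t) * sqrt (1 - t))) by ring; rewrite Hss; reflexivity).
      apply Rmult_le_compat; lra. }
    set (c := Bs ^ (2*n+1) / Fq (2*n+1) Bs).
    destruct (Rlt_or_le x 0) as [Hneg|Hpos].
    +
      rewrite Rabs_left in Hx by auto.
      destruct (Lop_local (Jstar n Bs) (Fq (2*n+1)) (Fq (2*n+2)) (Fq (2*n+3)) c (-1) n t x)
        as [H1 H2]; auto.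
      * assert (Hl : locally t (fun s => 0 < - x - Bs * sqrt (1 - s))).
        { apply loc_pos. apply (@ex_derive_continuous R_AbsRing R_NormedModule).
          auto_derive. lra. lra. }
        eapply filter_imp. 2: exact Hl. intros s Hs. unfold Jstar.
        destruct (Rlt_dec (Rabs x) (Bs * sqrt (1 - s))) as [C|_].
        { rewrite Rabs_left in C by auto. lra. }
        unfold g. destruct (Rle_dec x 0) as [_|C]; [|lra].
        unfold U. destruct (Rlt_dec x (Bs * sqrt (1 - s))) as [_|C].
        2:{ exfalso. apply C. pose proof (sqrt_pos (1 - s)). nra. }
        unfold c, Rdiv. ring.
      * assert (Hl1 : locally x (fun y => 0 < - y)).
        { apply loc_pos. apply (@ex_derive_continuous R_AbsRing R_NormedModule).
          auto_derive. auto. lra. }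
        assert (Hl2 : locally x (fun y => 0 < - y - Bs * sqrt (1 - t))).
        { apply loc_pos. apply (@ex_derive_continuous R_AbsRing R_NormedModule).
          auto_derive. auto. lra. }
        eapply filter_imp. 2: exact (filter_and _ _ Hl1 Hl2). intros y [Hy1 Hy2]. unfold Jstar.
        destruct (Rlt_dec (Rabs y) (Bs * sqrt (1 - t))) as [C|_].
        { rewrite Rabs_left in C by lra. lra. }
        unfold g. destruct (Rle_dec y 0) as [_|C]; [|lra].
        unfold U. destruct (Rlt_dec y (Bs * sqrt (1 - t))) as [_|C].
        2:{ exfalso. apply C. nra. }
        unfold c, Rdiv. ring.
      * split; auto. rewrite H2. apply poly_sign; auto. lra.
    +
      assert (Hxp : 0 < x).
      { destruct Hpos as [Hp|Hz]; auto. subst x. rewrite Rabs_R0 in Hx. nra. }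
      rewrite Rabs_pos_eq in Hx by lra.
      destruct (Lop_local (Jstar n Bs) (fun w => Fq (2*n+1) (- w)) (fun w => - Fq (2*n+2) (- w))
                  (fun w => Fq (2*n+3) (- w)) c 1 n t x) as [H1 H2]; auto.
      * intro w. rewrite Hode. ring.
      * assert (Hl : locally t (fun s => 0 < x - Bs * sqrt (1 - s))).
        { apply loc_pos. apply (@ex_derive_continuous R_AbsRing R_NormedModule).
          auto_derive. lra. lra. }
        eapply filter_imp. 2: exact Hl. intros s Hs. unfold Jstar.
        destruct (Rlt_dec (Rabs x) (Bs * sqrt (1 - s))) as [C|_].
        { rewrite Rabs_pos_eq in C by lra. lra. }
        unfold g. destruct (Rle_dec x 0) as [C|_]; [lra|].
        unfold U. destruct (Rlt_dec (- x) (Bs * sqrt (1 - s))) as [_|C].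
        2:{ exfalso. apply C. pose proof (sqrt_pos (1 - s)). nra. }
        replace (- x / sqrt (1 - s)) with (- (x * / sqrt (1 - s))) by (unfold Rdiv; ring).
        unfold c, Rdiv. ring.
      * assert (Hl1 : locally x (fun y => 0 < y)).
        { apply (loc_pos (fun y => y)). apply (@ex_derive_continuous R_AbsRing R_NormedModule).
          auto_derive. auto. lra. }
        assert (Hl2 : locally x (fun y => 0 < y - Bs * sqrt (1 - t))).
        { apply loc_pos. apply (@ex_derive_continuous R_AbsRing R_NormedModule).
          auto_derive. auto. lra. }
        eapply filter_imp. 2: exact (filter_and _ _ Hl1 Hl2). intros y [Hy1 Hy2]. unfold Jstar.
        destruct (Rlt_dec (Rabs y) (Bs * sqrt (1 - t))) as [C|_].
        { rewrite Rabs_pos_eq in C by lra. lra. }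
        unfold g. destruct (Rle_dec y 0) as [C|_]; [lra|].
        unfold U. destruct (Rlt_dec (- y) (Bs * sqrt (1 - t))) as [_|C].
        2:{ exfalso. apply C. nra. }
        replace (- y / sqrt (1 - t)) with (- (y * / sqrt (1 - t))) by (unfold Rdiv; ring).
        unfold c, Rdiv. ring.
      * split; auto. rewrite H2. apply poly_sign; auto. lra.
Qed.
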